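(* Let $Q$ be a weakly compact convex subset of a Banach space $U$. Let $r>0$, let $\beta:Q\to[0,1)$, and let $\beta_n:Q\to\mathbb{R}$ ($n\geq1$) be functions with $\beta_n(p)\to\beta(p)$ for every $p\in Q$. Suppose $T:Q\to Q$ satisfies: for all $p,q\in Q$ and $n\geq1$, $\|p-q\|<r$ implies $\|T^np-T^nq\|\leq\beta_n(p)\|p-q\|$. If there exists $q_0\in Q$ such that the asymptotic radius of $\{T^nq_0\}_n$ relative to $Q$ is less than $r$, then $T$ has a unique fixed point.
   Context: For a bounded sequence $\{x_n\}_n$ in $U$, its asymptotic radius relative to $Q$ is $\inf_{y\in Q}\limsup_{n\to\infty}\|x_n-y\|$. *)

(* Defs.v *)
From HB Require Import structures.
From mathcomp Require Import all_boot all_order all_algebra.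
From mathcomp Require Import all_classical all_reals all_analysis.
Set Implicit Arguments. Unset Strict Implicit. Unset Printing Implicit Defensive.
Import Order.TTheory GRing.Theory Num.Theory.
Import numFieldNormedType.Exports.
Local Open Scope classical_set_scope.
Local Open Scope ring_scope.

Definition linear_functional (R : realType) (U : normedModType R) :=
  {linear U -> R^o}.
Definition dual_index (R : realType) (U : normedModType R) :=
  sig (fun f : linear_functional U => continuous (f : U -> R^o)).

Definition weak_topology (R : realType) (U : normedModType R) : Type :=
  @sup_topology U (dual_index U)
    (fun f => Topological.class (initial_topology (sval f : U -> R^o))).

HB.instance Definition _ (R : realType) (U : normedModType R) :=
  Choice.on (weak_topology U).
HB.instance Definition _ (R : realType) (U : normedModType R) :=
  Topological.on (weak_topology U).

Definition weakly_compact (R : realType) (U : normedModType R) (Q : set U) :=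
  @compact (weak_topology U) Q.

Definition asymptotic_radius (R : realType) (U : normedModType R)
    (Q : set U) (x : nat -> U) : \bar R :=
  ereal_inf [set limn_esup (fun n => (`|x n - y|)%:E) | y in Q].

(* Main.v *)
Require Import Defs.
From HB Require Import structures.
From mathcomp Require Import all_boot all_order all_algebra.
From mathcomp Require Import all_classical all_reals all_analysis.
From mathcomp Require Import lra.
Set Implicit Arguments. Unset Strict Implicit. Unset Printing Implicit Defensive.
Import Order.TTheory GRing.Theory Num.Theory.
Import numFieldNormedType.Exports.
Local Open Scope classical_set_scope.
Local Open Scope ring_scope.
Definition goodG (R : realType) (V : lmodType R) (p : V -> R) (G : V -> R -> Prop) :=
  [/\ G 0 0, (forall u a v b, G u a -> G v b -> G (u + v) (a + b)),
     (forall s u a, G u a -> G (s *: u) (s * a)),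
     (forall a, G 0 a -> a = 0) & (forall u a, G u a -> a <= p u)].

Lemma hahn_banach (R : realType) (V : lmodType R) (p : V -> R) :
  (forall u v, p (u + v) <= p u + p v) ->
  (forall s v, 0 < s -> p (s *: v) <= s * p v) ->
  exists f : V -> R, (forall a u v, f (a *: u + v) = a * f u + f v) /\
                     (forall v, f v <= p v).
Proof.
move=> psub phom.
have p0 : 0 <= p 0.
  by have := psub 0 0; rewrite addr0 -lerBlDl subrr.
have phomE s v : 0 < s -> p (s *: v) = s * p v.
  move=> s0; apply/eqP; rewrite eq_le phom //=.
  have := phom s^-1 (s *: v); rewrite invr_gt0 s0 scalerA mulVf ?gt_eqF //.
  by rewrite scale1r => /(_ isT); rewrite ler_pdivlMl.
pose T := {G : V -> R -> Prop | goodG p G}.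
pose Rl := fun (s t : T) => `[< forall v a, sval s v a -> sval t v a >].
have G0 : goodG p (fun v a => v = 0 /\ a = 0).
  split.
  - by [].
  - by move=> u a v b [-> ->] [-> ->]; rewrite !addr0.
  - by move=> s u a [-> ->]; rewrite scaler0 mulr0.
  - by move=> a [].
  - by move=> u a [-> ->].
have [Gm Gmax] : exists t : T, premaximal Rl t.
  apply: (@ZL_preorder T (exist _ _ G0) Rl).
- by move=> t; apply/asboolP.
- by move=> r s t /asboolP rs /asboolP st; apply/asboolP => v a /rs /st.
- move=> A Atot.
  pose H := fun v a => (v = 0 /\ a = 0) \/ exists2 G : T, A G & sval G v a.
  have Hgood : goodG p H.
    split.
    - by left.
    - move=> u a v b [[-> ->]|[G AG Gua]] [[-> ->]|[G' AG' Gvb]].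
      + by left; rewrite !addr0.
      + by right; exists G' => //; rewrite !add0r.
      + by right; exists G => //; rewrite !addr0.
      + right; have [/asboolP GG'|/asboolP G'G] := Atot _ _ AG AG'.
          exists G' => //; case: (svalP G') => _ Hadd _ _ _.
          by apply: Hadd => //; apply: GG'.
        exists G => //; case: (svalP G) => _ Hadd _ _ _.
        by apply: Hadd => //; apply: G'G.
    - move=> s u a [[-> ->]|[G AG Gua]].
        by left; rewrite scaler0 mulr0.
      right; exists G => //; case: (svalP G) => _ _ Hs _ _; exact: Hs.
    - move=> a [[_ ->]//|[G AG Ga]].
      by case: (svalP G) => _ _ _ Hsv _; exact: Hsv.
    - move=> u a [[-> ->]//|[G AG Gua]].
      by case: (svalP G) => _ _ _ _ Hd; exact: Hd.
  exists (exist _ H Hgood) => s As; apply/asboolP => v a Hva /=.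
  by right; exists s.
have [Gm00 Gmadd Gmsc Gmsv Gmdom] := svalP Gm.
have total : forall v, exists a, sval Gm v a.
  move=> v0; apply/not_existsP => Hn.
  pose E := [set z | exists w b, sval Gm w b /\ z = b - p (w - v0)].
  have Eub w' b' : sval Gm w' b' -> ubound E (p (w' + v0) - b').
    move=> Gw' z [w [b [Gwb ->]]].
    have h1 := Gmdom _ _ (Gmadd _ _ _ _ Gwb Gw').
    have h2 := psub (w - v0) (w' + v0); rewrite addrACA addNr addr0 in h2.
    lra.
  have En0 : E !=set0 by exists (0 - p (0 - v0)); exists 0, 0.
  pose c := sup E.
  have cle w' b' : sval Gm w' b' -> c <= p (w' + v0) - b'.
    by move=> G'; apply: ge_sup => //; exact: Eub.
  have gec w b : sval Gm w b -> b - p (w - v0) <= c.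
    move=> Gwb; apply: ub_le_sup; first by exists (p (0 + v0) - 0); exact: Eub.
    by exists w, b.
  pose G' := fun v a => exists u b t, [/\ sval Gm u b, v = u + t *: v0 & a = b + t * c].
  have G'good : goodG p G'.
    split.
    - by exists 0, 0, 0; rewrite scale0r mul0r !addr0.
    - move=> u a v b [u1 [b1 [t1 [G1 -> ->]]]] [u2 [b2 [t2 [G2 -> ->]]]].
      exists (u1 + u2), (b1 + b2), (t1 + t2); split; first exact: Gmadd.
        by rewrite scalerDl addrACA.
      by rewrite mulrDl addrACA.
    - move=> s u a [u1 [b1 [t1 [G1 -> ->]]]].
      exists (s *: u1), (s * b1), (s * t1); split; first exact: Gmsc.
        by rewrite scalerDr scalerA.
      by rewrite mulrDr mulrA.
    - move=> a [u [b [t [Gub Hu ->]]]].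
      have [t0|tn0] := eqVneq t 0.
        move: Hu; rewrite t0 scale0r addr0 => Hu; rewrite -Hu in Gub.
        by rewrite (Gmsv _ Gub) mul0r addr0.
      exfalso; apply: (Hn (- t^-1 * b)).
      have -> : v0 = - t^-1 *: u.
        apply: (@scalerI _ _ t) => //; rewrite scalerA mulrN mulfV // scaleN1r.
        by apply/eqP; rewrite -addr_eq0 addrC -Hu.
      exact: Gmsc.
    - move=> v a [u [b [t [Gub -> ->]]]].
      have [tlt0|tgt0|t0] := ltgtP t 0.
      + pose s := - t; have s0 : 0 < s by rewrite oppr_gt0.
        have := gec _ _ (Gmsc s^-1 _ _ Gub).
        rewrite lerBlDr -(ler_pM2l s0) mulrDr mulrA mulfV ?gt_eqF // mul1r.
        rewrite -phomE // scalerDr scalerA mulfV ?gt_eqF // scale1r.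
        rewrite /s scaleNr mulNr scalerN opprK => H; lra.
      + have := cle _ _ (Gmsc t^-1 _ _ Gub).
        rewrite -(ler_pM2l tgt0) mulrBr mulrA mulfV ?gt_eqF // mul1r.
        rewrite -phomE // scalerDr scalerA mulfV ?gt_eqF // scale1r => H.
        by rewrite addrC -lerBrDr.
      + by rewrite t0 scale0r mul0r !addr0; exact: Gmdom.
  have RG : forall v a, G' v a -> sval Gm v a.
    have : Rl Gm (exist _ G' G'good).
      apply/asboolP => v a Gva /=; exists v, a, 0; split => //.
        by rewrite scale0r addr0.
      by rewrite mul0r addr0.
    by move=> /Gmax /asboolP.
  apply: (Hn c); apply: RG; exists 0, 0, 1; split => //.
    by rewrite scale1r add0r.
  by rewrite mul1r add0r.
have [f Hf] := choice total.
exists f; split; last by move=> v; exact: Gmdom.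
move=> a u v.
have H1 := Gmadd _ _ _ _ (Gmsc a _ _ (Hf u)) (Hf v).
have H2 := Gmsc (-1) _ _ (Hf (a *: u + v)).
have := Gmadd _ _ _ _ H1 H2.
rewrite scaleN1r subrr => /Gmsv /eqP.
by rewrite mulN1r subr_eq0 => /eqP.
Qed.

Lemma separation (R : realType) (U : normedModType R) (C : set U) (y : U) (d : R) :
  0 < d -> (exists c, C c) ->
  (forall c1 c2 (a : R), C c1 -> C c2 -> 0 <= a <= 1 -> C (a *: c1 + (1 - a) *: c2)) ->
  (forall c, C c -> d <= `|y - c|) ->
  exists f : dual_index U, forall c, C c -> sval f y + d <= sval f c.
Proof.
move=> d0 [c0 Cc0] Cconv Cd.
pose S (v : U) := [set z | exists t c, [/\ 0 <= t, C c & z = `|v + t *: (c - y)| - t * d]].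
have Slb v : lbound (S v) (- `|v|).
  move=> z [t [c [t0 Cc ->]]].
  have h1 : t * d <= `|t *: (c - y)|.
    rewrite normrZ ger0_norm // ler_wpM2l // distrC; exact: Cd.
  have h2 := ler_normD (- v) (v + t *: (c - y)).
  rewrite addKr normrN in h2.
  lra.
have Sn0 v : S v !=set0.
  by exists (`|v + 0 *: (c0 - y)| - 0 * d); exists 0, c0; split.
pose p v := inf (S v).
have pge v z : S v z -> p v <= z.
  by move=> Sz; apply: ge_inf => //; exists (- `|v|); exact: Slb.
have ple v x : (forall z, S v z -> x <= z) -> x <= p v.
  by move=> H; apply: lb_le_inf.
have psub u v : p (u + v) <= p u + p v.
  have H : forall z1 z2, S u z1 -> S v z2 -> p (u + v) <= z1 + z2.
    move=> _ _ [t1 [c1 [t10 Cc1 ->]]] [t2 [c2 [t20 Cc2 ->]]].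
    have [t12|t12] := eqVneq (t1 + t2) 0.
      have e1 : t1 = 0 by lra.
      have e2 : t2 = 0 by lra.
      rewrite e1 e2 !scale0r !mul0r !addr0 !subr0.
      apply: (le_trans (pge (u + v) _ _)); last exact: ler_normD.
      by exists 0, c0; split => //; rewrite scale0r mul0r addr0 subr0.
    have tp : 0 < t1 + t2 by rewrite lt_neqAle eq_sym t12 addr_ge0.
    pose a := t1 / (t1 + t2).
    have a01 : 0 <= a <= 1.
      apply/andP; split; first by rewrite divr_ge0 // addr_ge0.
      by rewrite ler_pdivrMr // mul1r lerDl.
    have Cc := Cconv _ _ _ Cc1 Cc2 a01.
    apply: (le_trans (pge (u + v) _ _)).
      exists (t1 + t2), (a *: c1 + (1 - a) *: c2); split => //.
      exact: addr_ge0.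
    have -> : (t1 + t2) *: (a *: c1 + (1 - a) *: c2 - y) = t1 *: (c1 - y) + t2 *: (c2 - y).
      rewrite !scalerDr !scalerA !scalerN scalerDl.
      have -> : (t1 + t2) * a = t1 by rewrite /a mulrC divfK.
      have -> : (t1 + t2) * (1 - a) = t2.
        rewrite mulrBr mulr1 [_ * a]mulrC divfK //; lra.
      by rewrite opprD !addrA; congr (_ + _); rewrite addrAC.
    have -> : u + v + (t1 *: (c1 - y) + t2 *: (c2 - y)) = (u + t1 *: (c1 - y)) + (v + t2 *: (c2 - y)).
      by rewrite addrACA.
    have := ler_normD (u + t1 *: (c1 - y)) (v + t2 *: (c2 - y)).
    lra.
  have H2 : forall z2, S v z2 -> p (u + v) - p u <= z2.
    move=> z2 Sz2; rewrite lerBlDl -lerBlDr; apply: ple => z1 Sz1.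
    by rewrite lerBlDr; apply: H.
  by rewrite -lerBlDl; apply: ple.
have phom s v : 0 < s -> p (s *: v) <= s * p v.
  move=> s0; rewrite -ler_pdivrMl //; apply: ple => z [t [c [t0 Cc ->]]].
  rewrite ler_pdivrMl //; apply: pge; exists (s * t), c; split => //.
    exact: mulr_ge0 (ltW s0) t0.
  by rewrite -scalerA -scalerDr normrZ gtr0_norm // mulrBr mulrA.
have [f [flin fp]] := hahn_banach psub phom.
have fnorm v : `|f v| <= `|v|.
  have pn w : p w <= `|w|.
    by apply: pge; exists 0, c0; split => //; rewrite scale0r mul0r addr0 subr0.
  rewrite ler_norml; apply/andP; split; last exact: le_trans (fp v) (pn v).
  have f0 : f 0 = 0.
    by have := flin 1 0 0; rewrite scaler0 addr0 mul1r => h; lra.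
  have : f (-1 *: v + 0) = - f v.
    by rewrite flin f0 addr0 mulN1r.
  rewrite scaleN1r addr0 => fN.
  have := le_trans (fp (- v)) (pn (- v)); rewrite fN normrN; lra.
have Hlin : linear_for ( *:%R : R -> R^o -> R^o) (f : U -> R^o).
  by move=> a u v; exact: flin.
pose F : {linear U -> R^o} := HB.pack (f : U -> R^o) (GRing.isLinear.Build R U R^o _ _ Hlin).
have Fc : continuous (F : U -> R^o).
  apply: bounded_linear_continuous; apply/bounded_funP => r.
  exists r => x xr; exact: le_trans (fnorm x) xr.
exists (exist _ F Fc) => c Cc /=.
have : f (y - c) <= - d.
  apply: le_trans (fp _) _; apply: pge; exists 1, c; split => //.
  by rewrite scale1r mul1r addrA subrK subrr normr0 sub0r.
have := flin (-1) c y; rewrite scaleN1r addrC mulN1r => ->.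
lra.
Qed.
Lemma weak_nbhs (R : realType) (U : normedModType R) (f : dual_index U) (y : U) (a : R) :
  sval f y < a -> @nbhs _ (weak_topology U) y [set z | sval f z < a].
Proof.
move=> fy.
have H : (@nbhs _ (weak_topology U) y) --> (y : initial_topology (sval f : U -> R^o)).
  have := @cvg_sup U (dual_index U) (fun f => Topological.class (initial_topology (sval f : U -> R^o))) (@nbhs _ (weak_topology U) y) y _.
  move=> /(_ _) h; apply: (h.1 _ f); exact: cvg_id.
apply: H.
apply: open_nbhs_nbhs; split => //.
have := @initial_continuous U R^o (sval f : U -> R^o).
move=> /continuousP hc.
exact: (hc [set x : R^o | x < a] (@open_lt R a)).

Qed.
Lemma rad_lt (R : realType) (U : normedModType R) (Q : set U) (x : nat -> U) (r : R) :
  (asymptotic_radius Q x < r%:E)%E ->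
  exists t, t < r /\ exists y, Q y /\ exists N, forall n, (N <= n)%N -> `|x n - y| <= t.
Proof.
move=> /ereal_inf_lt [_ [y Qy <-]] hy.
set u := fun n => (`|x n - y|)%:E in hy.
have E : limn_esup u = ereal_inf (range (esups u)).
  rewrite limn_esup_lim; apply/cvg_lim => //; exact: cvg_esups_inf.
rewrite E in hy.
have [_ [N _ <-] hN] := ereal_inf_lt hy.
have ub k : (N <= k)%N -> (u k <= esups u N)%E.
  move=> Nk; apply: ereal_sup_ubound; exists k => //.
have := ub N (leqnn N).
move: hN ub; case: (esups u N) => [t| |] // hN ub _.
  exists t; split; first by rewrite -lte_fin.
  by exists y; split => //; exists N => n Nn; rewrite -lee_fin; exact: ub.
Qed.
Lemma vec_id (R : realType) (U : normedModType R) (z c1 c2 : U) (a : R) :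
  z - (a *: c1 + (1 - a) *: c2) = a *: (z - c1) + (1 - a) *: (z - c2).
Proof.
rewrite !scalerBr addrACA -scalerDl.
have -> : a + (1 - a) = 1 by rewrite addrC subrK.
by rewrite scale1r opprD.
Qed.

Lemma norm_conv (R : realType) (U : normedModType R) (z c1 c2 : U) (a t : R) :
  0 <= a <= 1 -> `|z - c1| <= t -> `|z - c2| <= t ->
  `|z - (a *: c1 + (1 - a) *: c2)| <= t.
Proof.
move=> /andP[a0 a1] h1 h2; rewrite vec_id.
apply: le_trans (ler_normD _ _) _.
rewrite !normrZ (ger0_norm a0) ger0_norm ?subr_ge0 //.
have : a * `|z - c1| <= a * t by rewrite ler_wpM2l.
have : (1 - a) * `|z - c2| <= (1 - a) * t by rewrite ler_wpM2l // subr_ge0.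
lra.
Qed.

Lemma center (R : realType) (U : normedModType R) (Q : set U) (x : nat -> U) (rho : R) :
  weakly_compact Q ->
  (forall c1 c2 a, Q c1 -> Q c2 -> 0 <= a <= 1 -> Q (a *: c1 + (1 - a) *: c2)) ->
  (forall t, rho < t -> exists y, Q y /\ exists N, forall n, (N <= n)%N -> `|x n - y| <= t) ->
  exists y0, Q y0 /\ forall s, rho < s -> exists N, forall n, (N <= n)%N -> `|x n - y0| <= s.
Proof.
move=> wc cvx ne.
pose K t := [set y : weak_topology U | Q y /\ exists N, forall n, (N <= n)%N -> `|x n - y| <= t].
pose F := filter_from [set t | rho < t] K.
have FF : ProperFilter F.
  apply: filter_from_proper; last by move=> t /ne [y hy]; exists y.
  apply: filter_from_filter; first by exists (rho + 1) => /=; lra.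
  move=> i j ri rj; exists (Order.min i j); first by rewrite /= lt_min ri rj.
  have hi : Order.min i j <= i by rewrite ge_min lexx.
  have hj : Order.min i j <= j by rewrite ge_min lexx orbT.
  move=> y [Qy [N HN]]; split; split => //; exists N => n /HN h; exact: le_trans h _.
have FQ : F Q by exists (rho + 1); [rewrite /=; lra | move=> y []].
have [y0 [Qy0 cl]] := wc F FF FQ.
exists y0; split => // s rs.
pose t := (rho + s) / 2.
have rt : rho < t by rewrite /t; lra.
have ts : t < s by rewrite /t; lra.
have [c [[Qc [N HN]] yc]] : exists c, K t c /\ `|y0 - c| < s - t.
  apply/not_existsP => Hn.
  have Kd : forall c, K t c -> s - t <= `|y0 - c|.
    move=> c Kc; rewrite leNgt; apply/negP => h; apply: (Hn c); split => //.
  have Kne : exists c, K t c by have [y hy] := ne t rt; exists y.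
  have Kcv : forall c1 c2 a, K t c1 -> K t c2 -> 0 <= a <= 1 -> K t (a *: c1 + (1 - a) *: c2).
    move=> c1 c2 a [Q1 [N1 H1]] [Q2 [N2 H2]] a01; split; first exact: cvx.
    exists (maxn N1 N2) => n; rewrite geq_max => /andP[n1 n2].
    exact: norm_conv (H1 _ n1) (H2 _ n2).
  have [f Hf] := @separation R U (K t) y0 (s - t) ltac:(lra) Kne Kcv Kd.
  have W := @weak_nbhs R U f y0 (sval f y0 + (s - t)) ltac:(lra).
  have [z [Kz Wz]] := cl (K t) _ (ex_intro2 _ _ t rt (fun _ h => h)) W.
  have := Hf z Kz; move: Wz => /=; lra.
exists N => n /HN h.
have h2 := ler_normD (x n - c) (c - y0).
rewrite addrA subrK in h2; rewrite distrC in yc; lra.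
Qed.

Lemma ev_lt (R : realType) (u : nat -> R) (l b : R) :
  u n @[n --> \oo] --> l -> l < b -> exists M, forall n, (M <= n)%N -> u n < b.
Proof.
move=> hu lb; have [M _ HM] := cvgr_lt l hu b lb.
by exists M => n Mn; exact: HM.
Qed.

Lemma uniq_fix (R : realType) (U : normedModType R)
  (Q : set U) (r : R) (beta : U -> R) (betan : nat -> U -> R) (T : U -> U) :
  (forall c1 c2 a, Q c1 -> Q c2 -> 0 <= a <= 1 -> Q (a *: c1 + (1 - a) *: c2)) ->
  0 < r ->
  (forall p, Q p -> 0 <= beta p < 1) ->
  (forall p, Q p -> betan n p @[n --> \oo] --> beta p) ->
  (forall p q (n : nat), Q p -> Q q -> (0 < n)%N -> `|p - q| < r ->
     `|iter n T p - iter n T q| <= betan n p * `|p - q|) ->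
  forall p q, Q p -> Q q -> T p = p -> T q = q -> p = q.
Proof.
move=> cvx r0 b01 bcvg Hlip p q Qp Qq Tp Tq.
apply/eqP; apply/negPn/negP => pq.
pose D := `|q - p|.
have D0 : 0 < D by rewrite normr_gt0 subr_eq0 eq_sym.
pose N := (Num.truncn (D / r)).+1.
have NDr : D / r < N%:R := truncnS_gt _.
have N0 : 0 < N%:R :> R by rewrite ltr0n.
pose d := D / N%:R.
have d0 : 0 < d by rewrite divr_gt0.
have dr : d < r.
  by rewrite /d ltr_pdivrMr // mulrC -ltr_pdivrMr.
pose a (k : nat) := p + (k%:R / N%:R) *: (q - p).
have Qa k : (k <= N)%N -> Q (a k).
  move=> kN; have -> : a k = (k%:R / N%:R) *: q + (1 - k%:R / N%:R) *: p.
    by rewrite /a scalerBr scalerBl scale1r addrCA.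
  apply: cvx => //; apply/andP; split; first by rewrite divr_ge0.
  by rewrite ler_pdivrMr // mul1r ler_nat.
have a0 : a 0 = p by rewrite /a mul0r scale0r addr0.
have aN : a N = q by rewrite /a divff ?gt_eqF // scale1r addrC subrK.
have ad k : `|a k - a k.+1| = d.
  rewrite /a opprD addrACA subrr add0r -scalerBl -mulrBl.
  have -> : (k%:R - k.+1%:R) / N%:R = - (N%:R)^-1 :> R.
    by rewrite -natr1 opprD addrA subrr add0r mulN1r.
  by rewrite normrZ normrN normfV ger0_norm ?ler0n // mulrC.
have claim : forall k, (k <= N)%N -> exists c, [/\ c <= k%:R, ((0 < k)%N -> c < k%:R) &
    exists M, forall n, (M <= n)%N -> `|iter n T p - iter n T (a k)| <= c * d].
  elim => [|k IH] kN.
    by exists 0; split => //; exists 0%N => n _; rewrite a0 subrr normr0 mul0r.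
  have [c [ck _ [M HM]]] := IH (ltnW kN).
  have [b0 b1] := andP (b01 _ (Qa k (ltnW kN))).
  pose bk := (1 + beta (a k)) / 2.
  have bkk : beta (a k) < bk by rewrite /bk; lra.
  have [M' HM'] := ev_lt (bcvg _ (Qa k (ltnW kN))) bkk.
  exists (c + bk); split.
  - by rewrite -natr1; rewrite /bk; lra.
  - by move=> _; rewrite -natr1; rewrite /bk; lra.
  exists (maxn (maxn M M') 1) => n; rewrite !geq_max => /andP[/andP[nM nM'] n1].
  have h1 := HM n nM.
  have adr : `|a k - a k.+1| < r by rewrite ad.
  have h3 := Hlip _ _ n (Qa k (ltnW kN)) (Qa k.+1 kN) n1 adr.
  rewrite ad in h3.
  have h4 : betan n (a k) * d <= bk * d by rewrite ler_wpM2r // ltW // HM'.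
  have h5 := ler_normD (iter n T p - iter n T (a k)) (iter n T (a k) - iter n T (a k.+1)).
  rewrite addrA subrK in h5.
  rewrite mulrDl; lra.
have [c [_ cN [M HM]]] := claim N (leqnn N).
have := HM M (leqnn M); rewrite aN !iter_fix // distrC.
have : c * d < N%:R * d by rewrite ltr_pM2r // cN.
have Nd : N%:R * d = D by rewrite /d mulrC divfK ?gt_eqF.
rewrite Nd /D; lra.
Qed.

Unset Implicit Arguments.
Theorem mainTheorem7 (R : realType) (U : completeNormedModType R)
  (Q : set U) (r : R) (beta : U -> R) (betan : nat -> U -> R) (T : U -> U) :
  weakly_compact Q ->
  convex_set (Q : set (convex_lmodType U)) ->
  0 < r ->
  (forall p, Q p -> 0 <= beta p < 1) ->
  (forall p, Q p -> betan n p @[n --> \oo] --> beta p) ->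
  (forall p, Q p -> Q (T p)) ->
  (forall p q (n : nat), Q p -> Q q -> (0 < n)%N -> `|p - q| < r ->
     `|iter n T p - iter n T q| <= betan n p * `|p - q|) ->
  (exists2 q0, Q q0 &
     (asymptotic_radius Q (fun n => iter n T q0) < r%:E)%E) ->
  exists! p, Q p /\ T p = p.
Proof.
move=> wc cvxQ r0 b01 bcvg TQ Hlip [q0 Qq0 Hrad].
have cvx : forall c1 c2 a, Q c1 -> Q c2 -> 0 <= a <= 1 -> Q (a *: c1 + (1 - a) *: c2).
  move=> c1 c2 a Q1 Q2 /andP[a0 a1].
  have := cvxQ c1 c2 (Itv01 a0 a1) (mem_set Q1) (mem_set Q2).
  by rewrite inE.
have QiT n p : Q p -> Q (iter n T p).
  by move=> Qp; elim: n => //= n IH; exact: TQ.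
pose x n := iter n T q0.
have [t0 [t0r [y1 [Qy1 [N1 H1]]]]] := rad_lt Hrad.
pose S := [set t | exists y, Q y /\ exists N, forall n, (N <= n)%N -> `|x n - y| <= t].
have S0 t : S t -> 0 <= t.
  by move=> [y [_ [N HN]]]; exact: le_trans (normr_ge0 _) (HN N (leqnn N)).
have St0 : S t0 by exists y1; split => //; exists N1.
pose rho := inf S.
have Sne : S !=set0 by exists t0.
have rho_le t : S t -> rho <= t.
  by move=> St; apply: ge_inf => //; exists 0 => z /S0.
have rho0 : 0 <= rho by apply: lb_le_inf => // z /S0.
have ne : forall t, rho < t -> exists y, Q y /\ exists N, forall n, (N <= n)%N -> `|x n - y| <= t.
  move=> t rt; have [t' [y [Qy [N HN]]] t't] := inf_lt Sne rt.
  exists y; split => //; exists N => n /HN h.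
  exact: le_trans h (ltW t't).
have [y0 [Qy0 Hy0]] := center wc cvx ne.
have rhor : rho < r by apply: le_lt_trans (rho_le _ St0) t0r.
have rho_eq : rho <= 0.
  rewrite leNgt; apply/negP => rpos.
  have [bl0 bl1] := andP (b01 _ Qy0).
  pose b := (1 + beta y0) / 2.
  have bb : beta y0 < b by rewrite /b; lra.
  have [M HM] := ev_lt (bcvg _ Qy0) bb.
  pose m := M.+1.
  have bm : betan m y0 < b by apply: HM; rewrite /m.
  pose eps := Order.min ((r - rho) / 2) ((1 - b) * rho / 2).
  have eps0 : 0 < eps.
    rewrite /eps lt_min; apply/andP; split; first by lra.
    by rewrite divr_gt0 // mulr_gt0 // /b; lra.
  have e1 : eps <= (r - rho) / 2 by rewrite /eps ge_min lexx.
  have e2 : eps <= (1 - b) * rho / 2 by rewrite /eps ge_min lexx orbT.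
  pose s := rho + eps.
  have [N HN] := Hy0 s ltac:(rewrite /s; lra).
  have Sbs : S (b * s).
    exists (iter m T y0); split; first exact: QiT.
    exists (N + m)%N => n Nn.
    have -> : x n = iter m T (x (n - m)%N).
      by rewrite /x -iterD subnKC // (leq_trans _ Nn) // leq_addl.
    have mn : (m <= n)%N by apply: leq_trans Nn; rewrite leq_addl.
    have hN : (N <= n - m)%N by rewrite leq_subRL // addnC.
    have h := HN _ hN.
    have hr : `|y0 - x (n - m)%N| < r by rewrite distrC; rewrite /s in h; lra.
    have := Hlip _ _ m Qy0 (QiT _ _ Qq0) isT hr.
    move=> h2; rewrite distrC; apply: le_trans h2 _.
    apply: le_trans (_ : b * `|y0 - x (n - m)%N| <= _).
      by rewrite ler_wpM2r // ltW.
    rewrite ler_wpM2l; [by [] | by rewrite /b; lra | by rewrite distrC].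
  have := rho_le _ Sbs.
  have beps : b * eps <= eps.
    rewrite -subr_ge0 -{1}(mul1r eps) -mulrBl; apply: mulr_ge0; [rewrite /b; lra | exact: ltW].
  rewrite /s mulrDr.
  have : (1 - b) * rho = rho - b * rho by rewrite mulrBl mul1r.
  lra.
have lim0 : forall e, 0 < e -> exists N, forall n, (N <= n)%N -> `|x n - y0| <= e.
  by move=> e e0; apply: Hy0; lra.
have Ty0 : T y0 = y0.
  apply/eqP; rewrite -subr_eq0 -normr_eq0; apply: contraT => dn0.
  pose dd := `|T y0 - y0|.
  have d0 : 0 < dd by rewrite /dd lt_neqAle eq_sym dn0 normr_ge0.
  pose B := `|betan 1 y0|.
  pose e := Order.min (r / 2) (dd / (2 * (B + 1))).
  have B0 : 0 <= B by rewrite /B normr_ge0.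
  have e0 : 0 < e.
    rewrite /e lt_min; apply/andP; split; first by lra.
    by rewrite divr_gt0 // mulr_gt0 //; lra.
  have e1 : e <= r / 2 by rewrite /e ge_min lexx.
  have e2 : e * (2 * (B + 1)) <= dd.
    by rewrite -ler_pdivlMr ?mulr_gt0 //; [rewrite /e ge_min lexx orbT | lra].
  have [N HN] := lim0 e e0.
  have hN := HN N (leqnn N).
  have hN1 := HN N.+1 (leqnSn N).
  have hr : `|y0 - x N| < r by rewrite distrC; lra.
  have := Hlip _ _ 1 Qy0 (QiT _ _ Qq0) isT hr.
  rewrite /= -/(x N) => h.
  have h' : betan 1 y0 * `|y0 - x N| <= B * e.
    apply: le_trans (_ : B * `|y0 - x N| <= _).
      by rewrite ler_wpM2r // real_ler_norm // num_real.
    by rewrite ler_wpM2l // distrC.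
  have h5 := ler_normD (T y0 - x N.+1) (x N.+1 - y0).
  rewrite addrA subrK in h5.
  have xS : x N.+1 = T (x N) by [].
  rewrite xS in h5 hN1.
  rewrite -/dd in h5.
  lra.
exists y0; split; first by split.
move=> p [Qp Tp].
exact: (uniq_fix cvx r0 b01 bcvg Hlip Qy0 Qp Ty0 Tp).
Qed.
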